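(* Let $n,m\in\mathbb{N}_0$. Then $L_n^{(m)}\big(3+2\,\mathrm{Re}\sqrt[3]{3(1-i\sqrt2)}\big)=0$ if and only if $n=3$ and $m=0$.
   Context: Generalized Laguerre polynomials: $L_n^{(\alpha)}(x)=\sum_{j=0}^n(-1)^j\binom{n+\alpha}{n-j}\frac{x^j}{j!}$. Here $\sqrt[3]{\cdot}$ denotes the principal cube root, so that $3+2\,\mathrm{Re}\sqrt[3]{3(1-i\sqrt2)}$ is the largest root of $L_3^{(0)}(x)=\frac16(-x^3+9x^2-18x+6)$. *)

(* Defs.v *)
From Stdlib Require Import Reals.
From Coquelicot Require Import Coquelicot.
Open Scope R_scope.

Definition laguerre (n m : nat) (x : R) : R :=
  sum_f_R0 (fun j => (-1) ^ j * Binomial.C (n + m) (n - j) * x ^ j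
                     / INR (Factorial.fact j)) n.

Definition Carg (z : C) : R :=
  if Rlt_dec (Im z) 0 then - acos (Re z / Cmod z) else acos (Re z / Cmod z).

Definition cbrt (z : C) : C :=
  if Req_EM_T (Cmod z) 0 then (0, 0)
  else (Rpower (Cmod z) (1/3) * cos (Carg z / 3),
        Rpower (Cmod z) (1/3) * sin (Carg z / 3)).

Definition x0 : R := 3 + 2 * Re (cbrt (3, - (3 * sqrt 2))).

(* Main.v *)
Require Import Defs.
From Stdlib Require Import Reals ZArith Znumtheory Lia Lra.
From Coquelicot Require Import Coquelicot.
Open Scope Z_scope.

Definition Pc (s t : Z) : Z := s*s*s - 9*s*s*t + 18*s*t*t - 6*t*t*t.

Lemma three_div_cube s : (3 | s*s*s) -> (3 | s).
Proof.
  intro H. destruct (prime_mult 3 prime_3 (s*s) s H) as [H1|H1]; auto.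
  destruct (prime_mult 3 prime_3 s s H1); auto.
Qed.

Lemma norat_aux : forall k t s, (Z.abs_nat t < k)%nat -> t <> 0 -> Pc s t <> 0.
Proof.
  induction k as [|k IH]; intros t s Hk Ht HP; [lia|].
  unfold Pc in HP.
  assert (Hs : (3 | s)).
  { apply three_div_cube. exists (3*s*s*t - 6*s*t*t + 2*t*t*t). lia. }
  destruct Hs as [s1 ->].
  assert (Ht3 : (3 | t)).
  { apply three_div_cube.
    assert (E: s1 * 3 * (s1 * 3) * (s1 * 3) - 9 * (s1 * 3) * (s1 * 3) * t + 18 * (s1 * 3) * t * t - 6 * t * t * t
       = 3 * (3*(3*s1*s1*s1 - 9*s1*s1*t + 6*s1*t*t) - 2*(t*t*t))) by ring.
    rewrite E in HP.
    set (X := (3*s1*s1*s1 - 9*s1*s1*t + 6*s1*t*t)) in *. set (T := t*t*t) in *.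
    assert (H2 : (3 | 2 * T)) by (exists X; lia).
    destruct (prime_mult 3 prime_3 2 T H2) as [H|H]; auto.
    destruct H as [q Hq]; lia. }
  destruct Ht3 as [t1 ->].
  apply (IH t1 s1); [lia|lia|].
  unfold Pc.
  assert (E: s1 * 3 * (s1 * 3) * (s1 * 3) - 9 * (s1 * 3) * (s1 * 3) * (t1 * 3) + 18 * (s1 * 3) * (t1 * 3) * (t1 * 3) -
     6 * (t1 * 3) * (t1 * 3) * (t1 * 3) = 27 * (s1 * s1 * s1 - 9 * s1 * s1 * t1 + 18 * s1 * t1 * t1 - 6 * t1 * t1 * t1)) by ring.
  rewrite E in HP. set (Y := s1 * s1 * s1 - 9 * s1 * s1 * t1 + 18 * s1 * t1 * t1 - 6 * t1 * t1 * t1) in *. lia.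
Qed.

Lemma norat s t : t <> 0 -> Pc s t <> 0.
Proof. intro; apply (norat_aux (S (Z.abs_nat t))); auto. Qed.
Open Scope R_scope.

Lemma sqrt3_pos : 0 < sqrt 3.
Proof. apply sqrt_lt_R0; lra. Qed.

Lemma sqrt3_sq : sqrt 3 * sqrt 3 = 3.
Proof. apply sqrt_sqrt; lra. Qed.

Lemma cmodz : Cmod (3, - (3 * sqrt 2)) = 3 * sqrt 3.
Proof.
  unfold Cmod; simpl.
  replace (3 * (3 * 1) + - (3 * sqrt 2) * (- (3 * sqrt 2) * 1)) with ((3 * sqrt 3)^2).
  - apply sqrt_pow2. pose proof sqrt3_pos; lra.
  - assert (sqrt 2 * sqrt 2 = 2) by (apply sqrt_sqrt; lra).
    pose proof sqrt3_sq. nra.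
Qed.

Lemma cos3 t : cos (3 * t) = 4 * cos t ^ 3 - 3 * cos t.
Proof.
  replace (3 * t) with (2 * t + t) by ring.
  rewrite cos_plus, cos_2a, sin_2a.
  pose proof (sin2_cos2 t). unfold Rsqr in *.
  assert (E : sin t * sin t = 1 - cos t * cos t) by lra.
  replace ((cos t * cos t - sin t * sin t) * cos t - 2 * sin t * cos t * sin t)
    with (cos t * (cos t * cos t) - 3 * cos t * (sin t * sin t)) by ring.
  rewrite E. ring.
Qed.

Lemma x0_root : x0 ^ 3 - 9 * x0 ^ 2 + 18 * x0 - 6 = 0.
Proof.
  pose proof sqrt3_pos as H3. pose proof sqrt3_sq as H33.
  unfold x0, cbrt. rewrite cmodz.
  destruct (Req_EM_T (3 * sqrt 3) 0) as [E|_]; [lra|].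
  unfold Carg. simpl.
  destruct (Rlt_dec (- (3 * sqrt 2)) 0) as [_|N].
  2:{ exfalso; apply N. assert (0 < sqrt 2) by (apply sqrt_lt_R0; lra). lra. }
  rewrite cmodz.
  set (th := acos (3 / (3 * sqrt 3))).
  assert (Hc : cos th = 1 / sqrt 3).
  { unfold th. rewrite cos_acos.
    - field. lra.
    - assert (1 < sqrt 3).
      { rewrite <- sqrt_1. apply sqrt_lt_1; lra. }
      replace (3 / (3 * sqrt 3)) with (/ sqrt 3) by (field; lra).
      split.
      + assert (0 < / sqrt 3) by (apply Rinv_0_lt_compat; lra). lra.
      + rewrite <- Rinv_1. apply Rlt_le, Rinv_lt_contravar; lra. }
  assert (Hr : Rpower (3 * sqrt 3) (1/3) = sqrt 3).
  { replace (3 * sqrt 3) with (sqrt 3 ^ 3) by (simpl; nra).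
    unfold Rpower. rewrite ln_pow by lra. simpl INR.
    replace (1 / 3 * ((1 + 1 + 1) * ln (sqrt 3))) with (ln (sqrt 3)) by field.
    apply exp_ln; lra. }
  rewrite Hr.
  replace (- th / 3) with (- (th / 3)) by field.
  rewrite cos_neg.
  set (c := cos (th / 3)).
  assert (Hc3 : 4 * c ^ 3 - 3 * c = 1 / sqrt 3).
  { unfold c. rewrite <- cos3. replace (3 * (th/3)) with th by field. exact Hc. }
  assert (E : sqrt 3 * (4 * c ^ 3 - 3 * c) = 1).
  { rewrite Hc3. field. lra. }
  match goal with |- ?L = 0 => replace L with
    (2 * (sqrt 3 * sqrt 3) * (sqrt 3 * (4 * c^3 - 3 * c)) + 6 * (sqrt 3 * sqrt 3) * (sqrt 3 * c) - 18 * (sqrt 3 * c) - 6) by ring end.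
  rewrite E, H33. ring.
Qed.

Lemma rat_root (s t : Z) : t <> 0%Z -> IZR t * x0 = IZR s -> False.
Proof.
  intros Ht H. apply (norat s t Ht). apply eq_IZR.
  unfold Pc. repeat rewrite ?plus_IZR, ?minus_IZR, ?mult_IZR. rewrite <- H.
  pose proof x0_root as R.
  replace 0 with (IZR t * IZR t * IZR t * (x0 ^ 3 - 9 * x0 ^ 2 + 18 * x0 - 6)) by (rewrite R; ring).
  ring.
Qed.

Lemma indep (a b c : Z) : IZR a + IZR b * x0 + IZR c * x0 ^ 2 = 0 -> a = 0%Z /\ b = 0%Z /\ c = 0%Z.
Proof.
  intro H. pose proof x0_root as R.
  destruct (Z.eq_dec c 0) as [Ec|Ec].
  - subst c. destruct (Z.eq_dec b 0) as [Eb|Eb].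
    + subst b. split; [|auto]. apply eq_IZR. lra.
    + exfalso. apply (rat_root (-a) b Eb). rewrite opp_IZR. lra.
  - exfalso.
    set (U := (a*b + 9*a*c - 6*c*c)%Z).
    set (V := (b*b - a*c + 9*b*c + 18*c*c)%Z).
    assert (HUV : IZR U + IZR V * x0 = 0).
    { replace (IZR U + IZR V * x0) with
        (IZR c * IZR c * (x0 ^ 3 - 9 * x0 ^ 2 + 18 * x0 - 6)
         - (IZR c * x0 - 9 * IZR c - IZR b) * (IZR a + IZR b * x0 + IZR c * x0 ^ 2)).
      - rewrite R, H. ring.
      - unfold U, V. repeat rewrite ?plus_IZR, ?minus_IZR, ?mult_IZR. ring. }
    destruct (Z.eq_dec V 0) as [EV|EV].
    + rewrite EV in HUV. assert (EU : U = 0%Z) by (apply eq_IZR; lra).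
      apply (norat (b + 9*c) c Ec).
      assert (Pc (b + 9 * c) c = c * U + (b + 9*c) * V)%Z by (unfold Pc, U, V; ring).
      rewrite H0, EU, EV. ring.
    + apply (rat_root (-U) V EV). rewrite opp_IZR. lra.
Qed.
Fixpoint binom (n k : nat) : nat :=
  match n, k with
  | _, O => 1%nat
  | O, S _ => 0%nat
  | S n', S k' => (binom n' k' + binom n' (S k'))%nat
  end.

Lemma binom_gt n k : (n < k)%nat -> binom n k = 0%nat.
Proof.
  revert k; induction n as [|n IH]; intros [|k] Hk; simpl; try lia; auto.
  rewrite !IH; lia.
Qed.

Lemma binom_nn n : binom n n = 1%nat.
Proof. induction n; simpl; auto. rewrite IHn, binom_gt; lia. Qed.

Lemma C_binom n k : (k <= n)%nat -> Binomial.C n k = INR (binom n k).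
Proof.
  revert k; induction n as [|n IH]; intros k Hk.
  - assert (k = 0%nat) by lia; subst. unfold Binomial.C; simpl. field.
  - destruct k as [|k].
    + unfold Binomial.C. simpl binom. replace (S n - 0)%nat with (S n) by lia.
      simpl (fact 0). rewrite ?INR_1. rewrite ?INR_1. field. apply INR_fact_neq_0.
    + destruct (Nat.eq_dec k n) as [->|Hkn].
      * rewrite binom_nn. unfold Binomial.C. rewrite Nat.sub_diag. simpl (fact 0). rewrite ?INR_1.
        field. apply INR_fact_neq_0.
      * rewrite <- pascal by lia. simpl binom. rewrite plus_INR, !IH by lia. reflexivity.
Qed.

Fixpoint rprod (a k : nat) : nat :=
  match k with O => 1%nat | S k' => (rprod a k' * (a + S k'))%nat end.

Lemma rprod_fact a k : fact (a + k) = (fact a * rprod a k)%nat.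
Proof.
  induction k as [|k IH]; simpl.
  - rewrite Nat.add_0_r; lia.
  - rewrite Nat.add_succ_r. change (fact (S (a + k))) with (S (a + k) * fact (a + k))%nat.
    rewrite IH. lia.
Qed.

Definition bcoef (n m j : nat) : nat := (binom n j * rprod (m + j) (n - j))%nat.

Lemma term_eq n m j x : (j <= n)%nat ->
  (-1) ^ j * Binomial.C (n + m) (n - j) * x ^ j / INR (fact j) * INR (fact n)
  = (-1) ^ j * INR (bcoef n m j) * x ^ j.
Proof.
  intro Hj. unfold bcoef. rewrite mult_INR, <- C_binom by lia.
  unfold Binomial.C.
  replace (n + m - (n - j))%nat with (m + j)%nat by lia.
  replace (n + m)%nat with (m + j + (n - j))%nat by lia.
  rewrite rprod_fact, mult_INR.
  pose proof (INR_fact_neq_0 j). pose proof (INR_fact_neq_0 (n - j)).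
  pose proof (INR_fact_neq_0 (m + j)).
  field. auto.
Qed.

Lemma laguerre_scaled n m x :
  INR (fact n) * laguerre n m x = sum_f_R0 (fun j => (-1) ^ j * INR (bcoef n m j) * x ^ j) n.
Proof.
  unfold laguerre. rewrite scal_sum. apply sum_eq. intros j Hj. apply term_eq; auto.
Qed.

Definition T3 : Type := (Z * Z * Z)%type.
Definition mulx (v : T3) : T3 := let '(a, b, c) := v in (6 * c, a - 18 * c, b + 9 * c)%Z.
Definition tadd (u v : T3) : T3 :=
  let '(a, b, c) := u in let '(a', b', c') := v in (a + a', b + b', c + c')%Z.
Definition tsc (k : Z) (u : T3) : T3 := let '(a, b, c) := u in (k * a, k * b, k * c)%Z.
Definition red (j : nat) : T3 := Nat.iter j mulx (1, 0, 0)%Z.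
Definition tval (v : T3) : R := let '(a, b, c) := v in IZR a + IZR b * x0 + IZR c * x0 ^ 2.

Lemma mulx_val v : tval (mulx v) = x0 * tval v.
Proof.
  destruct v as [[a b] c]. cbn [mulx tval].
  repeat rewrite ?plus_IZR, ?minus_IZR, ?mult_IZR.
  apply Rminus_diag_uniq.
  pose proof x0_root as R.
  replace (IZR 6 * IZR c + (IZR a - IZR 18 * IZR c) * x0 + (IZR b + IZR 9 * IZR c) * x0 ^ 2 -
     x0 * (IZR a + IZR b * x0 + IZR c * x0 ^ 2)) with (- IZR c * (x0 ^ 3 - 9 * x0 ^ 2 + 18 * x0 - 6)) by ring.
  rewrite R. ring.
Qed.

Lemma red_val j : x0 ^ j = tval (red j).
Proof.
  induction j as [|j IH].
  - cbn. ring.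
  - unfold red. simpl Nat.iter. fold (red j). rewrite mulx_val, <- IH. simpl. ring.
Qed.

Lemma tadd_val u v : tval (tadd u v) = tval u + tval v.
Proof. destruct u as [[a b] c]; destruct v as [[a' b'] c']; cbn [tadd tval].
  rewrite !plus_IZR. ring. Qed.

Lemma tsc_val k u : tval (tsc k u) = IZR k * tval u.
Proof. destruct u as [[a b] c]; cbn [tsc tval]. rewrite !mult_IZR. ring. Qed.

Fixpoint sgn (j : nat) : Z := match j with O => 1%Z | S j' => (- sgn j')%Z end.

Lemma sgn_val j : (-1) ^ j = IZR (sgn j).
Proof. induction j; simpl; auto. rewrite IHj, opp_IZR. ring. Qed.

Definition F (n m j : nat) : Z := (sgn j * Z.of_nat (bcoef n m j))%Z.

Fixpoint Wx (n m k : nat) : T3 :=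
  match k with
  | O => (0, 0, 0)%Z
  | S k' => tadd (Wx n m k') (tsc (F n m k') (red k'))
  end.

Lemma Wx_val n m k :
  tval (Wx n m (S k)) = sum_f_R0 (fun j => (-1) ^ j * INR (bcoef n m j) * x0 ^ j) k.
Proof.
  induction k as [|k IH].
  - cbn [Wx]. rewrite tadd_val, tsc_val, <- red_val. unfold F. rewrite mult_IZR, <- sgn_val, <- INR_IZR_INZ.
    simpl sum_f_R0. cbn [tval]. ring.
  - change (Wx n m (S (S k))) with (tadd (Wx n m (S k)) (tsc (F n m (S k)) (red (S k)))).
    rewrite tadd_val, tsc_val, <- red_val, IH. unfold F. rewrite mult_IZR, <- sgn_val, <- INR_IZR_INZ.
    cbn [sum_f_R0 pow]. ring.
Qed.

Lemma W_zero n m : laguerre n m x0 = 0 -> Wx n m (S n) = (0, 0, 0)%Z.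
Proof.
  intro H.
  assert (E : tval (Wx n m (S n)) = 0).
  { rewrite Wx_val, <- laguerre_scaled, H. ring. }
  destruct (Wx n m (S n)) as [[a b] c]. cbn [tval] in E.
  destruct (indep a b c E) as [-> [-> ->]]. reflexivity.
Qed.

Open Scope Z_scope.

Lemma pair3 (a b c a' b' c' : Z) : a = a' -> b = b' -> c = c' -> (a, b, c) = (a', b', c').
Proof. intros -> -> ->; reflexivity. Qed.

Definition tdiv (d : Z) (v : T3) : Prop := let '(a, b, c) := v in (d | a) /\ (d | b) /\ (d | c).

Lemma mulx_inv d v : rel_prime d 6 -> tdiv d (mulx v) -> tdiv d v.
Proof.
  intros Hr. destruct v as [[a b] c]. cbn [mulx tdiv]. intros [H1 [H2 H3]].
  assert (Hc : (d | c)) by (apply (Gauss d 6 c H1 Hr)).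
  split; [|split]; auto.
  - replace a with ((a - 18 * c) + 18 * c) by ring. apply Z.divide_add_r; auto. apply Z.divide_mul_r; auto.
  - replace b with ((b + 9 * c) - 9 * c) by ring. apply Z.divide_sub_r; auto. apply Z.divide_mul_r; auto.
Qed.

Lemma iter_inv d k v : rel_prime d 6 -> tdiv d (Nat.iter k mulx v) -> tdiv d v.
Proof.
  intro Hr. induction k as [|k IH]; simpl; auto.
  intro H. apply IH. apply mulx_inv; auto.
Qed.

Lemma mulx_lin3 a b c u v w :
  tadd (tadd (tsc a (mulx u)) (tsc b (mulx v))) (tsc c (mulx w))
  = mulx (tadd (tadd (tsc a u) (tsc b v)) (tsc c w)).
Proof.
  destruct u as [[u1 u2] u3]; destruct v as [[v1 v2] v3]; destruct w as [[w1 w2] w3].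
  cbn [tadd tsc mulx red Nat.iter]. apply pair3; ring.
Qed.

Lemma three_iter k a b c :
  tadd (tadd (tsc a (red k)) (tsc b (red (S k)))) (tsc c (red (S (S k)))) = Nat.iter k mulx (a, b, c).
Proof.
  induction k as [|k IH].
  - cbn [tadd tsc mulx red Nat.iter]. apply pair3; ring.
  - change (Nat.iter (S k) mulx (a,b,c)) with (mulx (Nat.iter k mulx (a,b,c))). rewrite <- IH.
    change (red (S (S (S k)))) with (mulx (red (S (S k)))).
    change (red (S (S k))) with (mulx (red (S k))) at 1.
    change (red (S k)) with (mulx (red k)) at 1.
    apply mulx_lin3.
Qed.

Lemma tdiv_Wx d n m k : (forall j, (j < k)%nat -> (d | F n m j)) -> tdiv d (Wx n m k).
Proof.
  induction k as [|k IH]; intro H.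
  - cbn. repeat split; apply Z.divide_0_r.
  - cbn [Wx]. specialize (IH (fun j Hj => H j ltac:(lia))).
    assert (Hk : (d | F n m k)) by (apply H; lia).
    destruct (Wx n m k) as [[a b] c]. destruct (red k) as [[a' b'] c'].
    cbn [tdiv tadd tsc] in *. destruct IH as [? [? ?]].
    repeat split; apply Z.divide_add_r; auto; apply Z.divide_mul_l; auto.
Qed.

Lemma bcoef_nn n m : bcoef n m n = 1%nat.
Proof. unfold bcoef. rewrite binom_nn, Nat.sub_diag. reflexivity. Qed.

Lemma F_nn n m : F n m n = 1 \/ F n m n = -1.
Proof.
  unfold F. rewrite bcoef_nn. simpl Z.of_nat. induction n; simpl; lia.
Qed.

Lemma mod_contra n m k d : n = (k + 2)%nat -> 1 < d -> rel_prime d 6 ->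
  (forall j, (j < k)%nat -> (d | F n m j)) -> Wx n m (S n) = (0, 0, 0) -> False.
Proof.
  intros Hn Hd Hr Hj HW.
  assert (E : Wx n m (S n) = tadd (Wx n m k)
     (tadd (tadd (tsc (F n m k) (red k)) (tsc (F n m (S k)) (red (S k)))) (tsc (F n m (S (S k))) (red (S (S k)))))).
  { subst n. replace (S (k + 2)) with (S (S (S k))) by lia. cbn [Wx].
    destruct (Wx (k+2) m k) as [[a b] c].
    destruct (tsc (F (k + 2) m k) (red k)) as [[a1 b1] c1].
    destruct (tsc (F (k + 2) m (S k)) (red (S k))) as [[a2 b2] c2].
    destruct (tsc (F (k + 2) m (S (S k))) (red (S (S k)))) as [[a3 b3] c3].
    cbn [tadd tsc mulx red Nat.iter]. apply pair3; ring. }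
  rewrite three_iter in E.
  pose proof (tdiv_Wx d n m k Hj) as H1.
  assert (H2 : tdiv d (Nat.iter k mulx (F n m k, F n m (S k), F n m (S (S k))))).
  { destruct (Nat.iter k mulx (F n m k, F n m (S k), F n m (S (S k)))) as [[a b] c].
    destruct (Wx n m k) as [[a' b'] c']. rewrite HW in E. cbn [tdiv tadd] in E, H1.
    injection E as Ea Eb Ec. cbn [tdiv]. destruct H1 as [? [? ?]].
    split; [|split].
    - replace a with (- a') by lia. apply Z.divide_opp_r; auto.
    - replace b with (- b') by lia. apply Z.divide_opp_r; auto.
    - replace c with (- c') by lia. apply Z.divide_opp_r; auto. }
  apply iter_inv in H2; auto. cbn [tdiv] in H2. destruct H2 as [_ [_ H3]].
  replace (S (S k)) with n in H3 by lia.
  destruct (F_nn n m) as [E1|E1]; rewrite E1 in H3.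
  - apply Z.divide_1_r in H3. lia.
  - apply Z.divide_opp_r in H3. apply Z.divide_1_r in H3. lia.
Qed.

Lemma pair3_inv (a b c a' b' c' : Z) : (a, b, c) = (a', b', c') -> a = a' /\ b = b' /\ c = c'.
Proof. intro E. inversion E. auto. Qed.

Lemma rp1 q : rel_prime (6 * q + 1) 6.
Proof. apply bezout_rel_prime. apply (Bezout_intro _ _ _ 1 (- q)). ring. Qed.

Lemma rp5 q : rel_prime (6 * q + 5) 6.
Proof. apply bezout_rel_prime. apply (Bezout_intro _ _ _ (-1) (q + 1)). ring. Qed.

Lemma exists_d (N : Z) : 5 <= N -> exists d, 1 < d /\ rel_prime d 6 /\ (d | (N-2)*(N-1)*N).
Proof.
  intro HN.
  assert (D0 : forall d, (d | N - 2) -> (d | (N-2)*(N-1)*N)).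
  { intros d Hd. apply Z.divide_mul_l, Z.divide_mul_l, Hd. }
  assert (D1 : forall d, (d | N - 1) -> (d | (N-2)*(N-1)*N)).
  { intros d Hd. apply Z.divide_mul_l, Z.divide_mul_r, Hd. }
  assert (D2 : forall d, (d | N) -> (d | (N-2)*(N-1)*N)).
  { intros d Hd. apply Z.divide_mul_r, Hd. }
  pose proof (Z.div_mod N 6 ltac:(lia)) as EN.
  pose proof (Z.mod_pos_bound N 6 ltac:(lia)) as Br.
  set (q := N / 6) in *. set (r := N mod 6) in *.
  assert (r = 0 \/ r = 1 \/ r = 2 \/ r = 3 \/ r = 4 \/ r = 5) as Hr by lia.
  destruct Hr as [Hr|[Hr|[Hr|[Hr|[Hr|Hr]]]]].
  - exists (6 * (q - 1) + 5). split; [lia|split; [apply rp5|]]. apply D1. exists 1. lia.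
  - exists (6 * q + 1). split; [lia|split; [apply rp1|]]. apply D2. exists 1. lia.
  - exists (6 * q + 1). split; [lia|split; [apply rp1|]]. apply D1. exists 1. lia.
  - exists (6 * q + 1). split; [lia|split; [apply rp1|]]. apply D0. exists 1. lia.
  - pose proof (Z.div_mod q 2 ltac:(lia)) as Eq.
    pose proof (Z.mod_pos_bound q 2 ltac:(lia)) as Bq.
    set (p := q / 2) in *. set (e := q mod 2) in *.
    assert (e = 0 \/ e = 1) as He by lia. destruct He as [He|He].
    + exists (6 * p + 1). split; [lia|split; [apply rp1|]]. apply D0. exists 2. lia.
    + exists (6 * p + 5). split; [lia|split; [apply rp5|]]. apply D2. exists 2. lia.
  - exists (6 * q + 5). split; [lia|split; [apply rp5|]]. apply D2. exists 1. lia.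
Qed.

Lemma F_div n m j d : (j + 3 <= n)%nat ->
  (d | (Z.of_nat (m + n) - 2) * (Z.of_nat (m + n) - 1) * Z.of_nat (m + n)) -> (d | F n m j).
Proof.
  intros Hj Hd. unfold F, bcoef.
  set (t := (n - j - 3)%nat).
  replace (n - j)%nat with (S (S (S t))) by (unfold t; lia).
  cbn [rprod]. rewrite !Nat2Z.inj_mul.
  replace (Z.of_nat (m + j + S (S (S t)))) with (Z.of_nat (m + n)) by (unfold t; lia).
  replace (Z.of_nat (m + j + S (S t))) with (Z.of_nat (m + n) - 1) by (unfold t; lia).
  replace (Z.of_nat (m + j + S t)) with (Z.of_nat (m + n) - 2) by (unfold t; lia).
  apply Z.divide_mul_r.
  match goal with |- (d | ?B * (?R * ?X * ?Y * ?Z)) =>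
    replace (B * (R * X * Y * Z)) with ((B * R) * (X * Y * Z)) by ring end.
  apply Z.divide_mul_r. exact Hd.
Qed.

Close Scope Z_scope.

Theorem proposition4 (n m : nat) :
  laguerre n m x0 = 0 <-> (n = 3%nat /\ m = 0%nat).
Proof.
  split.
  - intro H. pose proof (W_zero n m H) as HW.
    destruct n as [|[|[|n']]].
    + exfalso. cbv beta iota zeta delta [Wx red tadd tsc mulx Nat.iter nat_rect] in HW. apply pair3_inv in HW. destruct HW as [H1 [H2 H3]].
      destruct (F_nn 0 m); lia.
    + exfalso. cbv beta iota zeta delta [Wx red tadd tsc mulx Nat.iter nat_rect] in HW. apply pair3_inv in HW. destruct HW as [H1 [H2 H3]].
      destruct (F_nn 1 m); lia.
    + exfalso. apply (mod_contra 2 m 0 5); [reflexivity|lia|apply rp5 with (q := 0%Z)|intros; lia|exact HW].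
    + destruct (le_lt_dec 5 (m + S (S (S n')))) as [Hb|Hb].
      * exfalso. destruct (exists_d (Z.of_nat (m + S (S (S n')))) ltac:(lia)) as [d [Hd1 [Hd2 Hd3]]].
        apply (mod_contra (S (S (S n'))) m (S n') d); auto; try lia.
        intros j Hj. apply F_div; auto. lia.
      * destruct n' as [|[|n'']]; [|destruct m as [|[|m']]|]; try lia.
        -- destruct m as [|m']; [auto|].
           destruct m' as [|m'']; [|lia].
           exfalso. vm_compute in HW. discriminate.
        -- exfalso. vm_compute in HW. discriminate.
  - intros [-> ->].
    assert (E : INR (fact 3) * laguerre 3 0 x0 = 0).
    { rewrite laguerre_scaled, <- Wx_val.
      replace (Wx 3 0 4) with (0, 0, 0)%Z by (vm_compute; reflexivity).
      cbn [tval]. ring. }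
    pose proof (INR_fact_neq_0 3). nra.
Qed.
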